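(* Let $k$ be a field of characteristic $0$, let $t$ be transcendental over $k$, and let $K=k(t)$. Let $\alpha,a,b,c,d,e,f\in k$ with $a,d$ not both zero, $ae=bd$, $af\neq cd$, $b^2\neq 4ac$ and $e^2\neq 4df$. Let $\lambda\in\operatorname{Emb}(k(t))$ be a $k$-linear embedding with $\lambda(t)=\alpha+\sqrt{\frac{at^2+bt+c}{dt^2+et+f}}$ (for some square root in $\overline{K}$). If $V$ is a simple two-sided vector space over $k(t)$ corresponding to $\lambda$, then $V$ has rank $2$.
   Context: Let $k\subset K$ be fields and $\overline{K}$ a fixed algebraic closure of $K$. A two-sided vector space is a $K\otimes_k K$-module $V$; left (resp. right) multiplication by $K$ means the action of $K\otimes 1$ (resp. $1\otimes K$); ${}_KV$ and $V_K$ denote the corresponding restrictions of scalars. $V$ has rank $n$ if $\dim_K({}_KV)=\dim_K(V_K)=n$. $\operatorname{Emb}(K)$ is the set of $k$-linear field embeddings $K\to\overline{K}$; $G=\operatorname{Aut}(\overline{K}/K)$ acts on it by left composition, and $\lambda^G$ denotes the orbit. For a homomorphism $\phi:K\to M_n(K)$, $K^n_\phi$ denotes the two-sided vector space of row vectors $K^n$ with left action $x\cdot(v_1,\dots,v_n)=(xv_1,\dots,xv_n)$ and right action $v\cdot x=v\phi(x)$. For $K$ perfect and $\lambda\in\operatorname{Emb}(K)$ with $|\lambda^G|=n<\infty$, let $K(\lambda)\subset\overline{K}$ be the composite of $K$ and $\lambda(K)$ (it has $[K(\lambda):K]=n$), choose a basis $\alpha_1,\dots,\alpha_n$ of $K(\lambda)$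 over $K$, define $\lambda_i:K\to K$ by $\lambda(x)=\sum_i\lambda_i(x)\alpha_i$, define $\beta_{ijk}\in K$ by $\alpha_i\alpha_j=\sum_k\beta_{ijk}\alpha_k$, and set $\phi_{ij}(x)=\sum_{k}\beta_{jki}\lambda_k(x)$. The simple two-sided vector space corresponding to $\lambda$ is (up to isomorphism) $K^n_\phi$; by a known classification, $\lambda^G\mapsto K^n_\phi$ is a bijection from finite $G$-orbits in $\operatorname{Emb}(K)$ to isomorphism classes of simple two-sided vector spaces of finite left dimension, and this space has left dimension $|\lambda^G|$. *)

(* Defs.v *)
From HB Require Import structures.
From mathcomp Require Import all_boot all_order all_algebra fraction.
Set Implicit Arguments. Unset Strict Implicit. Unset Printing Implicit Defensive.
Import Order.TTheory GRing.Theory Num.Theory.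
Local Open Scope ring_scope.

Notation ratfun k := {fraction {poly k}}.

Definition rcst (k : fieldType) (c : k) : ratfun k := FracField.tofrac (c%:P).
Definition tvar (k : fieldType) : ratfun k := FracField.tofrac 'X.

Definition is_subfield (L : fieldType) (S : L -> Prop) : Prop :=
  [/\ S 0, S 1,
      (forall x y, S x -> S y -> S (x - y)),
      (forall x y, S x -> S y -> S (x * y)) &
      (forall x, S x -> x != 0 -> S x^-1)].

Definition composite (K L : fieldType) (iota lam : K -> L) (x : L) : Prop :=
  forall S : L -> Prop, is_subfield S ->
    (forall y, S (iota y)) -> (forall y, S (lam y)) -> S x.

(* A two-sided vector space is given by an additive group V together with a
   left action [lact] and a right action [ract] of K. *)
Definition left_dim (K : fieldType) (V : zmodType) (lact : K -> V -> V)
    (m : nat) : Prop :=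
  exists w : 'I_m -> V,
    bijective (fun c : 'rV[K]_m => \sum_(i < m) lact (c 0 i) (w i)).

Definition right_dim (K : fieldType) (V : zmodType) (ract : V -> K -> V)
    (m : nat) : Prop :=
  exists w : 'I_m -> V,
    bijective (fun c : 'rV[K]_m => \sum_(i < m) ract (w i) (c 0 i)).

Definition has_rank (K : fieldType) (V : zmodType) (lact : K -> V -> V)
    (ract : V -> K -> V) (m : nat) : Prop :=
  left_dim lact m /\ right_dim ract m.

Definition sub_bimod (K : fieldType) (V : zmodType) (lact : K -> V -> V)
    (ract : V -> K -> V) (W : V -> Prop) : Prop :=
  [/\ W 0, (forall u v, W u -> W v -> W (u + v)),
      (forall x v, W v -> W (lact x v)) &
      (forall x v, W v -> W (ract v x))].

Definition simple_bimod (K : fieldType) (V : zmodType) (lact : K -> V -> V)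
    (ract : V -> K -> V) : Prop :=
  (exists v : V, v != 0) /\
  forall W, sub_bimod lact ract W -> (forall v, W v -> v = 0) \/ (forall v, W v).

Definition phi_of (K : fieldType) (n : nat) (lam : 'I_n -> K -> K)
    (beta : 'I_n -> 'I_n -> 'I_n -> K) (x : K) : 'M[K]_n :=
  \matrix_(i < n, j < n) \sum_(k < n) beta j k i * lam k x.

Definition iso_to_Kn_phi (K : fieldType) (V : zmodType) (lact : K -> V -> V)
    (ract : V -> K -> V) (n : nat) (phi : K -> 'M[K]_n) : Prop :=
  exists f : V -> 'rV[K]_n,
    [/\ bijective f, (forall u v, f (u + v) = f u + f v),
        (forall x v, f (lact x v) = x *: f v) &
        (forall x v, f (ract v x) = f v *m phi x)].

(* Main.v *)
Require Import Defs.
From HB Require Import structures.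
From mathcomp Require Import all_boot all_order all_algebra fraction generic_quotient.
From mathcomp Require Import ring zify.
Import Order.TTheory GRing.Theory Num.Theory.
From Stdlib Require Import ClassicalEpsilon.
Set Implicit Arguments. Unset Strict Implicit. Unset Printing Implicit Defensive.
Local Open Scope ring_scope.

HB.instance Definition _ (k : fieldType) :=
  GRing.RMorphism.copy (@rcst k) (@FracField.tofrac {poly k} \o polyC).
Lemma fracE (R : idomainType) (x : {fraction R}) :
  exists n d, d != 0 /\ x = FracField.tofrac n / FracField.tofrac d.
Proof.
elim/quotW: x => r.
exists (r.1), (r.2); split; first exact: denom_ratioP.
unlock FracField.tofrac.
rewrite -[_ / _]/(FracField.mul _ _) -[_^-1]/(FracField.inv _).
rewrite -FracField.pi_inv -FracField.pi_mul.
apply/eqmodP => /=.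
rewrite /FracField.mulf /FracField.invf FracField.equivfE.
rewrite !numden_Ratio ?oner_eq0 ?denom_ratioP ?mulf_neq0 ?oner_eq0 ?denom_ratioP //.
rewrite !(mulr1, mul1r) mulrC //.
Qed.
Lemma quartic (k : fieldType) (two : (2%:R : k) != 0) (A B C : k) (G : {poly k}) :
  A != 0 -> G ^+ 2 = A%:P * 'X^4 + B%:P * 'X^2 + C%:P -> B ^+ 2 = 4%:R * A * C.
Proof.
move=> A0 E.
have cf i : (G * G)`_i = (A%:P * 'X^4 + B%:P * 'X^2 + C%:P)`_i by rewrite -E.
have sA : size (A%:P * 'X^4 : {poly k}) = 5%N by rewrite size_Cmul ?size_polyXn.
have sBC : (size (B%:P * 'X^2 + C%:P : {poly k})%R < 5)%N.
  apply: (leq_ltn_trans (size_polyD _ _)).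
  rewrite size_polyC gtn_max (leq_ltn_trans (size_mul_leq _ _)) ?size_polyC ?size_polyXn //=.
  - by case: (C != 0).
  - by case: (B != 0).
have sR : size (A%:P * 'X^4 + B%:P * 'X^2 + C%:P) = 5%N.
  by rewrite -addrA size_addl sA.
have G0 : G != 0.
  by apply/eqP => G0; move: sR; rewrite -E G0 expr0n /= size_poly0.
have sG : size G = 3%N.
  move: sR; rewrite -E expr2 size_mul //; case: (size G) => // m; rewrite addSn /=; lia.
have g3 : G`_3 = 0 by rewrite nth_default ?sG.
have g4 : G`_4 = 0 by rewrite nth_default ?sG.
have c4 := cf 4%N; have c3 := cf 3%N; have c2 := cf 2%N; have c0 := cf 0%N; have c1 := cf 1%N.
move: c4 c3 c2 c1 c0.
rewrite !coefM !big_ord_recr !big_ord0 /= !coefD !coefCM !coefXn !coefC /= g3 g4.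
rewrite /subn /subn_rec /= !(mulr0, mul0r, addr0, add0r, mulr1).
move: G`_0 G`_1 G`_2 => g0 g1 g2 e4 e3 e2 e1 e0.
have g2n : g2 != 0 by apply: contraNneq A0 => g20; rewrite -e4 g20 mulr0.
have g1z : g1 = 0.
  have : g1 * (2%:R * g2) = 0 by rewrite -e3; ring.
  by move/eqP; rewrite mulf_eq0 mulf_eq0 (negbTE two) (negbTE g2n) !orbF => /eqP.
rewrite -e2 -e0 -e4 g1z. ring.
Qed.
Lemma poly_sq (k : fieldType) (p q P : {poly k}) :
  q != 0 -> p ^+ 2 = P * q ^+ 2 -> exists g, P = g ^+ 2.
Proof.
move=> q0 E.
have hp := divpK (dvdp_gcdl p q); have hq := divpK (dvdp_gcdr p q).
set g0 := gcdp p q in hp hq.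
have g00 : g0 != 0 by rewrite gcdp_eq0 negb_and q0 orbT.
have cop : coprimep (p %/ g0) (q %/ g0) by apply: coprimep_div_gcd; rewrite q0 orbT.
set p1 := p %/ g0 in hp cop; set q1 := q %/ g0 in hq cop.
have q10 : q1 != 0 by apply: contraNneq q0 => q10; rewrite -hq q10 mul0r.
have E1 : p1 ^+ 2 = P * q1 ^+ 2.
  apply: (mulIf (expf_neq0 2 g00)); by rewrite -exprMn hp E -hq exprMn mulrA.
have d1 : q1 %| p1 * p1.
  by rewrite -expr2 E1 expr2 mulrA dvdp_mull.
rewrite Gauss_dvdpl in d1; last by rewrite coprimep_sym.
have : q1 %| gcdp p1 q1 by rewrite dvdp_gcd d1 dvdpp.
have gn : gcdp p1 q1 != 0 by rewrite gcdp_eq0 negb_and q10 orbT.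
move/(dvdp_leq gn); move: cop; rewrite coprimep_def => /eqP -> s1.
have [c c0 qc] : exists2 c, c != 0 & q1 = c%:P.
  by apply/size_poly1P; rewrite eqn_leq s1 lt0n size_poly_eq0 q10.
exists (p1 * c^-1%:P).
by rewrite exprMn E1 qc -mulrA -!rmorphXn -rmorphM -exprMn mulfV // expr1n mulr1.
Qed.

Lemma sq_core (k : fieldType) (two : (2%:R : k) != 0) (A B C h : k) :
  A != 0 -> B ^+ 2 != 4%:R * A * C -> forall y : ratfun k,
  y ^+ 2 != rcst A * (tvar k - rcst h) ^+ 4 + rcst B * (tvar k - rcst h) ^+ 2 + rcst C.
Proof.
move=> A0 disc y; apply/eqP => Ey.
move: Ey; have [p [q [q0 ->]]] := @fracE _ y => Ey.
set Pp : {poly k} := A%:P * ('X - h%:P) ^+ 4 + B%:P * ('X - h%:P) ^+ 2 + C%:P.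
have EP : FracField.tofrac Pp = rcst A * (tvar k - rcst h) ^+ 4 + rcst B * (tvar k - rcst h) ^+ 2 + rcst C.
  rewrite /Pp !rmorphD (rmorphM _ A%:P) (rmorphM _ B%:P) !rmorphXn rmorphB //.
have tq0 : FracField.tofrac q != 0 by rewrite tofrac_eq0.
have E2 : p ^+ 2 = Pp * q ^+ 2.
  have : FracField.tofrac (p ^+ 2) = FracField.tofrac (Pp * q ^+ 2).
    by rewrite !tofracXn tofracM EP -Ey expr_div_n rmorphXn divfK ?(expf_neq0 2 tq0).
  by move=> H; apply/eqP; rewrite -(@tofrac_eq _ (p ^+ 2)) H.
have [g Eg] := @poly_sq _ _ _ _ q0 E2.
have : (g \Po ('X + h%:P)) ^+ 2 = A%:P * 'X^4 + B%:P * 'X^2 + C%:P.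
  by rewrite -rmorphXn -Eg /Pp !rmorphD (rmorphM _ A%:P) (rmorphM _ B%:P) !rmorphXn rmorphB /= !comp_polyC comp_polyX addrK.

move/(@quartic _ two _ _ _ _ A0) => /eqP; exact/negP.
Qed.

Section Sub.
Variable (L : fieldType) (S : L -> Prop) (HS : is_subfield S).
Lemma subf0 : S 0. Proof. by case: HS. Qed.
Lemma subf1 : S 1. Proof. by case: HS. Qed.
Lemma subfB x y : S x -> S y -> S (x - y). Proof. by case: HS => _ _ h _ _; apply: h. Qed.
Lemma subfM x y : S x -> S y -> S (x * y). Proof. by case: HS => _ _ _ h _; apply: h. Qed.
Lemma subfV x : S x -> S x^-1.
Proof.
case: HS => h0 _ _ _ h Sx; have [->|x0] := eqVneq x 0; last exact: h.
by rewrite invr0.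
Qed.
Lemma subfN x : S x -> S (- x). Proof. by move=> Sx; rewrite -sub0r; apply: subfB => //; apply: subf0. Qed.
Lemma subfD x y : S x -> S y -> S (x + y).
Proof. by move=> Sx Sy; rewrite -[y]opprK; apply: subfB => //; apply: subfN. Qed.
Lemma subfX x i : S x -> S (x ^+ i).
Proof. move=> Sx; elim: i => [|i IH]; first by rewrite expr0; exact: subf1. by rewrite exprS; apply: subfM. Qed.
Lemma subf_sum (I : Type) (r : seq I) (F : I -> L) : (forall i, S (F i)) -> S (\sum_(i <- r) F i).
Proof. by move=> h; elim: r => [|x r IH]; [rewrite big_nil; exact: subf0|rewrite big_cons; apply: subfD]. Qed.
End Sub.

Lemma gen_sub (k : fieldType) (L : fieldType) (mu : {rmorphism ratfun k -> L}) (S : L -> Prop) :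
  is_subfield S -> (forall c, S (mu (rcst c))) -> S (mu (tvar k)) -> forall x, S (mu x).
Proof.
move=> HS Sc St x.
have [p [q [_ ->]]] := @fracE _ x.
have P r : S (mu (FracField.tofrac r)).
  rewrite -[r]coefK poly_def rmorph_sum rmorph_sum; apply: (big_ind S).
  - exact: (subf0 HS).
  - by move=> x1 y1 hx hy; apply: (subfD HS).
  move=> i _.
  rewrite -mul_polyC rmorphM rmorphM rmorphXn rmorphXn.
  by apply: (subfM HS); [exact: Sc | apply: (subfX HS); exact: St].
by rewrite fmorph_div; apply: (subfM HS) => //; apply: (subfV HS).
Qed.

Lemma composite_sub (K L : fieldType) (iota lam : K -> L) :
  is_subfield (composite iota lam).
Proof.
split.
- by move=> S HS _ _; apply: (subf0 HS).
- by move=> S HS _ _; apply: (subf1 HS).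
- by move=> x y hx hy S HS h1 h2; apply: (subfB HS) => //; [apply: hx|apply: hy].
- by move=> x y hx hy S HS h1 h2; apply: (subfM HS) => //; [apply: hx|apply: hy].
- by move=> x hx _ S HS h1 h2; apply: (subfV HS) => //; apply: hx.
Qed.

Lemma quad_subfield (K L : fieldType) (mu : {rmorphism K -> L}) (th : L) (be ga : K) :
  (forall x y, mu x + mu y * th = 0 -> x = 0 /\ y = 0) ->
  th ^+ 2 = mu be * th + mu ga ->
  is_subfield (fun z => exists x y, z = mu x + mu y * th).
Proof.
move=> ind th2.
have th2' : th ^+ 2 - (mu be * th + mu ga) = 0 by rewrite th2 subrr.
split.
- by exists 0, 0; rewrite !rmorph0 mul0r addr0.
- by exists 1, 0; rewrite rmorph1 rmorph0 mul0r addr0.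
- move=> _ _ [x [y ->]] [x' [y' ->]]; exists (x - x'), (y - y').
  by rewrite !rmorphB; ring.
- move=> _ _ [x [y ->]] [x' [y' ->]].
  exists (x * x' + y * y' * ga), (x * y' + y * x' + y * y' * be).
  apply/eqP; rewrite -subr_eq0; apply/eqP.
  rewrite !rmorphD !rmorphM.
  rewrite -[X in _ = X](mulr0 (mu y * mu y')) -th2'; ring.
- move=> _ [x [y ->]] z0.
  set nm := x * x + x * y * be - y * y * ga.
  have Enm : (mu x + mu y * th) * (mu (x + y * be) + mu (- y) * th) = mu nm.
    apply/eqP; rewrite -subr_eq0; apply/eqP.
    rewrite /nm !rmorphD !rmorphN !rmorphM.
    rewrite -[X in _ = X](mulr0 (- (mu y * mu y))) -th2'; ring.
  have nm0 : nm != 0.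
    apply/eqP => nm0; move: Enm; rewrite nm0 rmorph0 => /eqP; rewrite mulf_eq0 (negbTE z0) /= => /eqP.
    move/ind => [h1 h2].
    have y0 : y = 0 by rewrite -[y]opprK h2 oppr0.
    move: h1; rewrite y0 mul0r addr0 => x0.
    by move: z0; rewrite x0 y0 !rmorph0 mul0r addr0 eqxx.
  exists ((x + y * be) / nm), (- y / nm).
  have mnm : mu nm != 0 by rewrite fmorph_eq0.
  apply: (mulfI z0); rewrite mulfV // !fmorph_div.
  by rewrite [mu (- y) / _ * th]mulrAC -mulrDl mulrA Enm mulfV.
Qed.
Lemma idND (F : fieldType) (a b c d f t : F) : a != 0 -> (2%:R : F) != 0 ->
  (a * t ^+ 2 + b * t + c) * (d * t ^+ 2 + (b * d / a) * t + f) =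
  (a * d) * (t - (- (b / (2%:R * a)))) ^+ 4 +
  (a * (f - d * b ^+ 2 / (4%:R * a ^+ 2)) + d * (c - b ^+ 2 / (4%:R * a))) * (t - (- (b / (2%:R * a)))) ^+ 2
  + (c - b ^+ 2 / (4%:R * a)) * (f - d * b ^+ 2 / (4%:R * a ^+ 2)).
Proof.
move=> a0 t0; have f0 : (4%:R : F) != 0.
  by rewrite (_ : 4%:R = 2%:R * 2%:R) ?mulf_neq0 // -natrM.
field. by rewrite a0 t0 f0.
Qed.

Section R.
Variable k : fieldType.
Lemma rcstD (x y : k) : rcst (x + y) = rcst x + rcst y. Proof. exact: rmorphD. Qed.
Lemma rcstB (x y : k) : rcst (x - y) = rcst x - rcst y. Proof. exact: rmorphB. Qed.
Lemma rcstN (x : k) : rcst (- x) = - rcst x. Proof. exact: rmorphN. Qed.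
Lemma rcstM (x y : k) : rcst (x * y) = rcst x * rcst y. Proof. exact: rmorphM. Qed.
Lemma rcstX (x : k) n : rcst (x ^+ n) = rcst x ^+ n. Proof. exact: rmorphXn. Qed.
Lemma rcstV (x : k) : rcst (x^-1) = (rcst x)^-1. Proof. exact: fmorphV. Qed.
Lemma rcstn n : rcst (n%:R : k) = n%:R. Proof. exact: rmorph_nat. Qed.
Lemma rcst0 : rcst (0 : k) = 0. Proof. exact: rmorph0. Qed.
Lemma rcst1 : rcst (1 : k) = 1. Proof. exact: rmorph1. Qed.
Lemma rcst_eq0 (x : k) : (rcst x == 0) = (x == 0). Proof. exact: fmorph_eq0. Qed.
End R.
Definition rcstE := (rcstD, rcstB, rcstN, rcstX, rcstM, rcstV, rcstn, rcst0, rcst1).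


Lemma four_ne0 (F : fieldType) : (2%:R : F) != 0 -> (4%:R : F) != 0.
Proof. by move=> t0; rewrite (_ : 4%:R = 2%:R * 2%:R) ?mulf_neq0 // -natrM. Qed.

Lemma discND (F : fieldType) (a b c d f : F) : a != 0 -> (2%:R : F) != 0 ->
  (a * (f - d * b ^+ 2 / (4%:R * a ^+ 2)) + d * (c - b ^+ 2 / (4%:R * a))) ^+ 2
  - 4%:R * (a * d) * ((c - b ^+ 2 / (4%:R * a)) * (f - d * b ^+ 2 / (4%:R * a ^+ 2)))
  = (a * f - c * d) ^+ 2.
Proof. move=> a0 t0; have f0 := four_ne0 t0; field. by rewrite a0 f0. Qed.

Lemma idDelta (F : fieldType) (a b c d e f u : F) :
  (b - u ^+ 2 * e) ^+ 2 - 4%:R * (a - u ^+ 2 * d) * (c - u ^+ 2 * f) =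
  (e ^+ 2 - 4%:R * d * f) * u ^+ 4 + (4%:R * a * f + 4%:R * c * d - 2%:R * b * e) * u ^+ 2
  + (b ^+ 2 - 4%:R * a * c).
Proof. ring. Qed.

Lemma discDelta (F : fieldType) (a b c d f : F) : a != 0 ->
  (4%:R * a * f + 4%:R * c * d - 2%:R * b * (b * d / a)) ^+ 2
  - 4%:R * ((b * d / a) ^+ 2 - 4%:R * d * f) * (b ^+ 2 - 4%:R * a * c)
  = 16%:R * (a * f - c * d) ^+ 2.
Proof. move=> a0; field. by rewrite a0. Qed.

Lemma idroot (F : fieldType) (A B C w : F) :
  (2%:R * A * w + B) ^+ 2 - (B ^+ 2 - 4%:R * A * C) = 4%:R * A * (A * w ^+ 2 + B * w + C).
Proof. ring. Qed.

Lemma D_ne0 (k : fieldType) (d e f : k) : d != 0 ->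
  rcst d * tvar k ^+ 2 + rcst e * tvar k + rcst f != 0.
Proof.
move=> d0.
have -> : rcst d * tvar k ^+ 2 + rcst e * tvar k + rcst f
   = FracField.tofrac (d%:P * 'X^2 + e%:P * 'X + f%:P).
  by rewrite /rcst /tvar !(tofracD, tofracXn, tofracM).
rewrite tofrac_eq0; apply/eqP => /(congr1 (fun p : {poly k} => p`_2)).
rewrite !coefD !coefCM coefXn coefX coefC /= mulr1 mulr0 !addr0 coef0.
by apply/eqP.
Qed.

Lemma nonsq_s (k : fieldType) (two : (2%:R : k) != 0) (a b c d e f : k) :
  a != 0 -> d != 0 -> a * e = b * d -> a * f != c * d ->
  forall y : ratfun k, y ^+ 2 != (rcst a * tvar k ^+ 2 + rcst b * tvar k + rcst c)
                               / (rcst d * tvar k ^+ 2 + rcst e * tvar k + rcst f).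
Proof.
move=> a0 d0 hae haf y; apply/eqP => hy.
have Dn := D_ne0 e f d0.
have ee : e = b * d / a by rewrite -hae mulrC mulrA mulVf // mul1r.
have two' : (2%:R : ratfun k) != 0 by rewrite -(@rcstn k 2) rcst_eq0.
have ra : rcst a != 0 by rewrite rcst_eq0.
set A' := a * d.
set c' := c - b ^+ 2 / (4%:R * a).
set f' := f - d * b ^+ 2 / (4%:R * a ^+ 2).
have dne : (a * f' + d * c') ^+ 2 != 4%:R * A' * (c' * f').
  apply/eqP => E; move: (@discND k a b c d f a0 two); rewrite -/c' -/f' -/A' E subrr.
  by move/esym/eqP; rewrite sqrf_eq0 subr_eq0 (negbTE haf).
move: hy Dn.
set N := rcst a * tvar k ^+ 2 + rcst b * tvar k + rcst c.
set D := rcst d * tvar k ^+ 2 + rcst e * tvar k + rcst f => hy Dn.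
have E1 : (y * D) ^+ 2 = N * D by rewrite exprMn hy (expr2 D) mulrA divfK.
have := @sq_core k two A' (a * f' + d * c') (c' * f') (- (b / (2%:R * a))) (mulf_neq0 a0 d0) dne (y * D).
move/eqP; apply; rewrite E1 /N /D.
rewrite ee /A' /c' /f' !rcstE.
exact: (@idND (ratfun k) (rcst a) (rcst b) (rcst c) (rcst d) (rcst f) (tvar k) ra two').
Qed.

Lemma Delta_nonsq (k : fieldType) (Hc : forall n, (n.+1%:R : k) != 0) (al a b c d e f : k) :
  a != 0 -> a * e = b * d -> a * f != c * d -> e ^+ 2 != 4%:R * d * f ->
  forall y : ratfun k, y ^+ 2 !=
   (rcst b - (tvar k - rcst al) ^+ 2 * rcst e) ^+ 2
   - 4%:R * (rcst a - (tvar k - rcst al) ^+ 2 * rcst d) * (rcst c - (tvar k - rcst al) ^+ 2 * rcst f).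
Proof.
move=> a0 hae haf he y.
have ee : e = b * d / a by rewrite -hae mulrC mulrA mulVf // mul1r.
have two := Hc 1%N.
have dne : (4%:R * a * f + 4%:R * c * d - 2%:R * b * e) ^+ 2
   != 4%:R * (e ^+ 2 - 4%:R * d * f) * (b ^+ 2 - 4%:R * a * c).
  apply/eqP => E; move: (@discDelta k a b c d f a0); rewrite -ee E subrr.
  move/esym/eqP; rewrite mulf_eq0 (negbTE (Hc 15%N)) /= sqrf_eq0 subr_eq0.
  by rewrite (negbTE haf).
have he' : e ^+ 2 - 4%:R * d * f != 0 by rewrite subr_eq0.
have := @sq_core k two _ _ _ al he' dne y.
rewrite !rcstE.
by rewrite (@idDelta (ratfun k) (rcst a) (rcst b) (rcst c) (rcst d) (rcst e) (rcst f) (tvar k - rcst al)).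
Qed.
Lemma quad_t (k : fieldType) (Hc : forall n, (n.+1%:R : k) != 0) (al a b c d e f : k) :
  a != 0 -> a * e = b * d -> a * f != c * d -> e ^+ 2 != 4%:R * d * f ->
  (rcst a - (tvar k - rcst al) ^+ 2 * rcst d) != 0 /\
  forall w : ratfun k,
  (rcst a - (tvar k - rcst al) ^+ 2 * rcst d) * w ^+ 2 + (rcst b - (tvar k - rcst al) ^+ 2 * rcst e) * w
   + (rcst c - (tvar k - rcst al) ^+ 2 * rcst f) != 0.
Proof.
move=> a0 hae haf he.
have H := Delta_nonsq Hc al a0 hae haf he.
move: H.
set A0 := rcst a - _ * rcst d; set B0 := rcst b - _ * rcst e; set C0 := rcst c - _ * rcst f => H.
split.
  apply/eqP => A00; move: (H B0); rewrite A00 mulr0 mul0r subr0 eqxx //.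
move=> w; apply/eqP => r0.
move: (H (2%:R * A0 * w + B0)); apply/negP; rewrite negbK.
by rewrite -subr_eq0 idroot r0 mulr0.
Qed.


Lemma inj_surj_bij (A B : Type) (a0 : A) (h : A -> B) :
  injective h -> (forall y, exists x, h x = y) -> bijective h.
Proof.
move=> hi hs.
pose g y := epsilon (inhabits a0) (fun x => h x = y).
have gK : cancel g h by move=> y; exact: (epsilon_spec (inhabits a0) (fun x => h x = y) (hs y)).
by exists g => // x; apply: hi; rewrite gK.
Qed.

Unset Implicit Arguments. Set Strict Implicit.

Theorem proposition1p3
  (k : fieldType) (Hchar : [pchar k] =i pred0)
  (L : closedFieldType) (iota : {rmorphism ratfun k -> L})
  (Lalg : forall z : L, exists2 p : {poly ratfun k}, p != 0 & root (map_poly iota p) z)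
  (al a b c d e f : k)
  (Had : (a != 0) || (d != 0))
  (Hae : a * e = b * d)
  (Haf : a * f != c * d)
  (Hb : b ^+ 2 != 4%:R * a * c)
  (He : e ^+ 2 != 4%:R * d * f)
  (lam : {rmorphism ratfun k -> L})
  (Hlin : forall x : k, lam (rcst x) = iota (rcst x))
  (Hlt : exists s : L,
      s ^+ 2 = iota ((rcst a * tvar k ^+ 2 + rcst b * tvar k + rcst c)
                   / (rcst d * tvar k ^+ 2 + rcst e * tvar k + rcst f))
      /\ lam (tvar k) = iota (rcst al) + s)
  (n : nat) (alpha : 'I_n -> L)
  (Halpha_in : forall i, composite iota lam (alpha i))
  (Halpha_free : forall cf : 'I_n -> ratfun k,
      \sum_(i < n) iota (cf i) * alpha i = 0 -> forall i, cf i = 0)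
  (Halpha_span : forall z, composite iota lam z ->
      exists cf : 'I_n -> ratfun k, z = \sum_(i < n) iota (cf i) * alpha i)
  (lami : 'I_n -> ratfun k -> ratfun k)
  (Hlami : forall x, lam x = \sum_(i < n) iota (lami i x) * alpha i)
  (beta : 'I_n -> 'I_n -> 'I_n -> ratfun k)
  (Hbeta : forall i j, alpha i * alpha j = \sum_(l < n) iota (beta i j l) * alpha l)
  (V : zmodType) (lact : ratfun k -> V -> V) (ract : V -> ratfun k -> V)
  (Hsimple : simple_bimod lact ract)
  (Hcorr : iso_to_Kn_phi lact ract (phi_of lami beta)) :
  has_rank lact ract 2.
Proof.
have Hc : forall m, (m.+1%:R : k) != 0 by move=> m; have /pcharf0P h := Hchar; rewrite h.
have two := Hc 1%N.
have a0 : a != 0.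
  apply/negP => /eqP a0; move: Had Hae Hb; rewrite a0 eqxx /= mul0r => d0 /esym/eqP.
  rewrite mulf_eq0 (negbTE d0) orbF => /eqP ->.
  by rewrite expr2 !(mul0r, mulr0) eqxx.
have d0 : d != 0.
  apply/negP => /eqP d0; move: Hae He; rewrite d0 mulr0 => /eqP.
  rewrite mulf_eq0 (negbTE a0) /= => /eqP ->.
  by rewrite expr2 !(mul0r, mulr0) eqxx.
have [s [Hs Hlt']] := Hlt.
have ist : forall x, iota (rcst x) = lam (rcst x) := fun x => esym (Hlin x).
have hs : s = lam (tvar k - rcst al).
  by rewrite rmorphB Hlin Hlt' addrAC subrr add0r.
have F1 : forall p q, iota p + iota q * s = 0 -> p = 0 /\ q = 0.
  move=> p q E.
  have [q0|qn] := eqVneq q 0.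
    by move: E; rewrite q0 rmorph0 mul0r addr0 => /eqP; rewrite fmorph_eq0 => /eqP.
  exfalso.
  have iq : iota q != 0 by rewrite fmorph_eq0.
  have sE : s = iota (- p / q).
    apply: (mulfI iq); rewrite fmorph_div rmorphN [RHS]mulrCA divff // mulr1.
    by apply/eqP; rewrite -addr_eq0 addrC E.
  move: Hs; rewrite sE -rmorphXn => /fmorph_inj /eqP.
  by apply/negP; apply: nonsq_s.
have [A0n Hroot] := quad_t Hc al a0 Hae Haf He.
move: A0n Hroot hs.
set u := tvar k - rcst al.
set A0 := rcst a - u ^+ 2 * rcst d; set B0 := rcst b - u ^+ 2 * rcst e.
set C0 := rcst c - u ^+ 2 * rcst f => A0n Hroot hs.
set T := iota (tvar k).
have quadL : lam A0 * T ^+ 2 + lam B0 * T + lam C0 = 0.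
  have Dn := D_ne0 e f d0.
  move: Hs Dn.
  set N := rcst a * tvar k ^+ 2 + rcst b * tvar k + rcst c.
  set D := rcst d * tvar k ^+ 2 + rcst e * tvar k + rcst f => Hs Dn.
  have HsD : s ^+ 2 * iota D = iota N by rewrite Hs fmorph_div divfK // fmorph_eq0.
  transitivity (iota N - s ^+ 2 * iota D); last by rewrite HsD subrr.
  rewrite hs /A0 /B0 /C0 /N /D /T /u !(rmorphXn, rmorphD, rmorphB, rmorphN, rmorphM) !ist; ring.
have F2 : forall x y, lam x + lam y * T = 0 -> x = 0 /\ y = 0.
  move=> x y E.
  have [y0|yn] := eqVneq y 0.
    by move: E; rewrite y0 rmorph0 mul0r addr0 => /eqP; rewrite fmorph_eq0 => /eqP.
  exfalso.
  have iy : lam y != 0 by rewrite fmorph_eq0.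
  have TE : T = lam (- x / y).
    apply: (mulfI iy); rewrite fmorph_div rmorphN [RHS]mulrCA divff // mulr1.
    by apply/eqP; rewrite -addr_eq0 addrC E.
  move: quadL; rewrite TE -rmorphXn -!rmorphM -!rmorphD => /eqP; rewrite fmorph_eq0.
  by apply/negP; apply: Hroot.
have lA : lam A0 != 0 by rewrite fmorph_eq0.
have T2 : T ^+ 2 = lam (- B0 / A0) * T + lam (- C0 / A0).
  apply: (mulfI lA).
  have -> : lam A0 * T ^+ 2 = - (lam B0 * T + lam C0).
    by apply/eqP; rewrite -addr_eq0 addrA quadL.
  rewrite !fmorph_div !rmorphN; field; exact: lA.
have Hs' : s ^+ 2 = iota 0 * s + iota ((rcst a * tvar k ^+ 2 + rcst b * tvar k + rcst c)
    / (rcst d * tvar k ^+ 2 + rcst e * tvar k + rcst f)).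
  by rewrite rmorph0 mul0r add0r.
have subQs := quad_subfield F1 Hs'.
have subQT := quad_subfield F2 T2.
move: subQs subQT.
set Qs := (fun z => exists x y, z = iota x + iota y * s).
set QT := (fun z => exists x y, z = lam x + lam y * T) => subQs subQT.
have subE := composite_sub iota lam.
have HEs : forall z, composite iota lam z -> Qs z.
  move=> z; apply => //.
  - by move=> y; exists y, 0; rewrite rmorph0 mul0r addr0.
  - apply: gen_sub => //.
    + by move=> x; rewrite Hlin; exists (rcst x), 0; rewrite rmorph0 mul0r addr0.
    + by rewrite Hlt'; exists (rcst al), 1; rewrite rmorph1 mul1r.
have HET : forall z, composite iota lam z -> QT z.
  move=> z; apply => //.
  - apply: gen_sub => //.
    + by move=> x; rewrite ist; exists (rcst x), 0; rewrite rmorph0 mul0r addr0.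
    + by exists 0, 1; rewrite rmorph0 rmorph1 mul1r add0r.
  - by move=> y; exists y, 0; rewrite rmorph0 mul0r addr0.
have HsE : forall z, Qs z -> composite iota lam z.
  move=> _ [p [q ->]] S HS h1 h2.
  apply: (subfD HS); first exact: h1.
  apply: (subfM HS); first exact: h1.
  rewrite (_ : s = lam (tvar k) - iota (rcst al)); last by rewrite Hlt' addrAC subrr add0r.
  by apply: (subfB HS).
have HTE : forall z, QT z -> composite iota lam z.
  move=> _ [p [q ->]] S HS h1 h2.
  apply: (subfD HS); first exact: h2.
  by apply: (subfM HS); [exact: h2|exact: h1].
have om : (ord_max == ord0 :> 'I_2) = false by [].
have I2 : forall j : 'I_2, j = ord0 \/ j = ord_max.
  by case=> [[|[|j]] hj]; [left; apply: val_inj|right; apply: val_inj|].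
have Hex : forall i, exists pq : ratfun k * ratfun k, alpha i = iota pq.1 + iota pq.2 * s.
  move=> i; have [p [q E]] := HEs _ (Halpha_in i).
  by exists (p, q).
have [pq Hpq] := fin_all_exists Hex.
pose M : 'M[ratfun k]_(n, 2) := \matrix_(i < n, j < 2) (if j == ord0 then (pq i).1 else (pq i).2).
have sumM : forall cc : 'rV[ratfun k]_n, \sum_i iota (cc ord0 i) * alpha i
    = iota ((cc *m M) ord0 ord0) + iota ((cc *m M) ord0 ord_max) * s.
  move=> cc; rewrite !mxE !rmorph_sum big_distrl /= -big_split /=; apply: eq_bigr => i _.
  by rewrite !mxE eqxx om Hpq !rmorphM; ring.
have rfM : row_free M.
  apply/inj_row_free => cc hc; apply/rowP => i; rewrite mxE.
  have := Halpha_free (fun i => cc ord0 i) _ i; rewrite ord1; apply.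
  by rewrite sumM hc !mxE rmorph0 mul0r addr0.
have nle : (n <= 2)%N by rewrite -(eqP rfM) rank_leq_col.
have E1 : composite iota lam 1 by apply: HsE; exists 1, 0; rewrite rmorph1 rmorph0 mul0r addr0.
have Es : composite iota lam s by apply: HsE; exists 0, 1; rewrite rmorph1 rmorph0 mul1r add0r.
have [uu Hu] := Halpha_span 1 E1.
have [vv Hv] := Halpha_span s Es.
pose M2 : 'M[ratfun k]_(2, n) := \matrix_(j < 2, i < n) (if j == ord0 then uu i else vv i).
have sumM2 : forall cc : 'rV[ratfun k]_2, \sum_i iota ((cc *m M2) ord0 i) * alpha i
    = iota (cc ord0 ord0) * 1 + iota (cc ord0 ord_max) * s.
  move=> cc; rewrite Hu Hv !big_distrr -big_split /=; apply: eq_bigr => i _.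
  rewrite !mxE !big_ord_recr big_ord0 /= add0r !mxE.
  rewrite (_ : widen_ord _ _ = ord0); last by apply: val_inj.
  by rewrite eqxx om !rmorphD !rmorphM; ring.
have rfM2 : row_free M2.
  apply/inj_row_free => cc hc.
  have := sumM2 cc; rewrite hc (eq_bigr (fun _ => 0)); last by move=> i _; rewrite mxE rmorph0 mul0r.
  rewrite big1 // mulr1 => /esym/F1 [h0 h1].
  apply/rowP => j; rewrite mxE; by case: (I2 j) => ->; [exact: h0|exact: h1].
have nge : (2 <= n)%N by rewrite -(eqP rfM2) rank_leq_col.
have n2 : n = 2%N by apply/eqP; rewrite eqn_leq nle nge.
subst n.
pose l0 (z : L) := (epsilon (inhabits (0, 0)) (fun pq : ratfun k * ratfun k => z = iota pq.1 + iota pq.2 * s)).1.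
have l0E : forall p q, l0 (iota p + iota q * s) = p.
  move=> p q.
  have := epsilon_spec (inhabits (0, 0)) (fun pq : ratfun k * ratfun k => iota p + iota q * s = iota pq.1 + iota pq.2 * s) (ex_intro _ (p, q) (erefl _)).
  rewrite /l0; move: (epsilon _ _) => [x1 x2] /= E.
  have : iota (p - x1) + iota (q - x2) * s = 0.
    rewrite !rmorphB; transitivity ((iota p + iota q * s) - (iota x1 + iota x2 * s)); first ring.
    by rewrite E subrr.
  by move/F1 => [/eqP]; rewrite subr_eq0 => /eqP.
have l0lin : forall r z z', Qs z -> Qs z' -> l0 (iota r * z + z') = r * l0 z + l0 z'.
  move=> r _ _ [p [q ->]] [p' [q' ->]].
  rewrite (_ : iota r * (iota p + iota q * s) + (iota p' + iota q' * s)
    = iota (r * p + p') + iota (r * q + q') * s); last by rewrite !rmorphD !rmorphM; ring.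
  by rewrite !l0E.
have Qs0 : Qs 0 by exists 0, 0; rewrite rmorph0 mul0r addr0.
have l0D : forall z z', Qs z -> Qs z' -> l0 (z + z') = l0 z + l0 z'.
  by move=> z z' hz hz'; rewrite -[z in LHS]mul1r -(rmorph1 iota) l0lin // mul1r.
have l0M : forall r z, Qs z -> l0 (iota r * z) = r * l0 z.
  have l00 : l0 0 = 0 by have := l0E 0 0; rewrite rmorph0 mul0r addr0.
  by move=> r z hz; rewrite -[_ * z]addr0 l0lin // l00 addr0.
have EM : forall z z', composite iota lam z -> composite iota lam z' -> composite iota lam (z * z').
  by move=> z z' hz hz'; apply: (subfM subE).
pose Psi (z : L) : 'rV[ratfun k]_2 := \row_j l0 (z * alpha j).
have w0 : widen_ord (leqnSn 1) ord_max = ord0 :> 'I_2 by apply: val_inj.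
have QE : forall z, composite iota lam z -> forall j, Qs (z * alpha j).
  by move=> z hz j; apply: HEs; apply: EM => //; exact: Halpha_in.
have Qsi : forall r, Qs (iota r) by move=> r; exists r, 0; rewrite rmorph0 mul0r addr0.
have QsM : forall r w, Qs w -> Qs (iota r * w) by move=> r w hw; apply: (subfM subQs).
have PsiD : forall z z', composite iota lam z -> composite iota lam z' -> Psi (z + z') = Psi z + Psi z'.
  by move=> z z' hz hz'; apply/rowP => j; rewrite !mxE mulrDl l0D //; exact: QE.
have PsiM : forall r z, composite iota lam z -> Psi (iota r * z) = r *: Psi z.
  by move=> r z hz; apply/rowP => j; rewrite !mxE -mulrA l0M //; exact: QE.
have lamA : forall x j, lam x * alpha j = \sum_i iota (\sum_k beta j k i * lami k x) * alpha i.
  move=> x j; rewrite mulrC Hlami big_distrr /=.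
  under eq_bigr do rewrite mulrCA Hbeta.
  rewrite !big_ord_recr !big_ord0 /= !add0r !rmorphD !rmorphM; ring.
have Psi3 : forall z x, composite iota lam z -> Psi z *m phi_of lami beta x = Psi (z * lam x).
  move=> z x hz.
  have side : forall r i, Qs (iota r * (z * alpha i)) by move=> r i; apply: QsM; apply: QE.
  apply/rowP => j; rewrite /Psi !mxE.
  rewrite -mulrA lamA big_distrr /= !big_ord_recr !big_ord0 /= !add0r.
  rewrite ![z * (iota _ * _)]mulrCA l0D; [|exact: side|exact: side].
  rewrite !l0M; [|exact: QE|exact: QE].
  rewrite /phi_of !mxE !big_ord_recr !big_ord0 /= !add0r; ring.
have Psi4 : forall z, composite iota lam z -> Psi z = 0 -> z = 0.
  move=> z hz hP; apply/eqP; apply/negP => /negP zn.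
  have hzi : composite iota lam z^-1 by apply: (subfV subE).
  have [cf Hcf] := Halpha_span _ hzi.
  have h0 : forall i, l0 (z * alpha i) = 0.
    by move=> i; move: (congr1 (fun v : 'rV[ratfun k]_2 => v 0 i) hP); rewrite /Psi !mxE.
  have side : forall r i, Qs (iota r * (z * alpha i)) by move=> r i; apply: QsM; apply: QE.
  have : l0 (z * z^-1) = 0.
    rewrite Hcf big_distrr /= !big_ord_recr big_ord0 /= add0r.
    rewrite ![z * (iota _ * _)]mulrCA l0D; [|exact: side|exact: side].
    by rewrite !l0M ?h0 ?mulr0 ?addr0 //; exact: QE.
  rewrite divff //.
  have := l0E 1 0; rewrite rmorph1 rmorph0 mul0r addr0 => ->.
  by move/eqP; rewrite oner_eq0.
have E1s : forall p q, composite iota lam (iota p + iota q * s).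
  by move=> p q; apply: HsE; exists p, q.
pose G : 'M[ratfun k]_2 := \matrix_(i < 2, j < 2) ((if i == ord0 then Psi 1 else Psi s) 0 j).
have cG : forall cc : 'rV[ratfun k]_2, cc *m G = Psi (iota (cc 0 ord0) + iota (cc 0 ord_max) * s).
  move=> cc; rewrite -[iota (cc 0 ord0)]mulr1 PsiD ?PsiM //; last first.
  - by apply: (subfM subE).
  - by apply: (subfM subE) => //; rewrite -(rmorph1 iota) -[iota 1]addr0 -[X in _ + X](mul0r s) -(rmorph0 iota).
  apply/rowP => j; rewrite !mxE !big_ord_recr big_ord0 /= add0r !mxE.
  by rewrite w0.
have rfG : row_free G.
  apply/inj_row_free => cc hc.
  move: hc; rewrite cG => /Psi4 => /(_ (E1s _ _)) /F1 [h0 h1].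
  by apply/rowP => j; rewrite mxE; case: (I2 j) => ->; [exact: h0|exact: h1].
have uG : G \in unitmx by rewrite -row_free_unit.
have Psi5 : forall v, exists z, composite iota lam z /\ Psi z = v.
  move=> v; exists (iota ((v *m invmx G) 0 ord0) + iota ((v *m invmx G) 0 ord_max) * s).
  by split; [exact: E1s | rewrite -cG mulmxKV].
have ET : composite iota lam T by apply: HTE; exists 0, 1; rewrite rmorph0 rmorph1 mul1r add0r.
have Elam : forall x, composite iota lam (lam x) by move=> x S HS h1 h2; exact: h2.
pose hm (cc : 'rV[ratfun k]_2) := Psi (lam (cc 0 ord0) + lam (cc 0 ord_max) * T).
have Ehm : forall cc : 'rV[ratfun k]_2, composite iota lam (lam (cc 0 ord0) + lam (cc 0 ord_max) * T).
  by move=> cc; apply: (subfD subE) => //; apply: (subfM subE).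
have hbij : bijective hm.
  apply: (inj_surj_bij 0).
  - move=> c1 c2 h12.
    have : Psi ((lam (c1 0 ord0) + lam (c1 0 ord_max) * T) - (lam (c2 0 ord0) + lam (c2 0 ord_max) * T)) = 0.
      have := PsiD _ _ (Ehm c2) (subfB subE (Ehm c1) (Ehm c2)).
      by rewrite addrC subrK -/(hm c1) -/(hm c2) h12 => /eqP; rewrite addrC -subr_eq subrr eq_sym => /eqP.
    move/Psi4 => /(_ (subfB subE (Ehm c1) (Ehm c2))).
    rewrite (_ : _ - _ = lam (c1 0 ord0 - c2 0 ord0) + lam (c1 0 ord_max - c2 0 ord_max) * T); last first.
      by rewrite !rmorphB; ring.
    move/F2 => [/eqP h0 /eqP h1]; move: h0 h1; rewrite !subr_eq0 => /eqP h0 /eqP h1.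
    by apply/rowP => j; case: (I2 j) => ->; [exact: h0|exact: h1].
  - move=> v; have [z [hz <-]] := Psi5 v.
    have [x [y ->]] := HET _ hz.
    exists (\row_j (if j == ord0 then x else y)).
    by rewrite /hm !mxE eqxx om.
have [ff [[gg fK gK] fD fl fr]] := Hcorr.
have f0 : ff 0 = 0.
  have := fD 0 0; rewrite addr0 => h; apply: (addrI (ff 0)); by rewrite -h addr0.
have fsum : forall (I : Type) (r : seq I) (F : I -> V), ff (\sum_(i <- r) F i) = \sum_(i <- r) ff (F i).
  by move=> I r F; apply: (big_morph ff fD f0).
have gbij : bijective gg by exists ff.
split.
- exists (fun i => gg (delta_mx 0 i)).
  apply: (eq_bij gbij) => cc /=; apply: (can_inj fK); rewrite gK fsum.
  rewrite [LHS]row_sum_delta; apply: eq_bigr => i _; by rewrite fl gK.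
- exists (fun i => gg (if i == ord0 then Psi 1 else Psi T)).
  apply: (eq_bij (bij_comp gbij hbij)) => cc /=; apply: (can_inj fK); rewrite gK fsum.
  rewrite !big_ord_recr big_ord0 /= add0r !fr !gK w0.
  rewrite !Psi3 // mul1r /hm PsiD //; last by apply: (subfM subE).
  by rewrite mulrC.
Qed.
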